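(* For all positive integers $k,t_1,\dots,t_k$ and all real $b,c>1$, $$\prod_{j=1}^k\left(\sum_{p_j=1}^{t_j}\binom{t_j-1}{p_j-1}b^{t_j-p_j}(ct_j)^{cp_j}\right)\le\big(c(t_1+\cdots+t_k)+b\big)^{c(t_1+\cdots+t_k)}.$$ *)

(* Defs.v *)
From Stdlib Require Import Reals.
Open Scope R_scope.

Fixpoint sum1 (n : nat) (f : nat -> R) : R :=
  match n with O => 0 | S m => sum1 m f + f (S m) end.

Fixpoint prod1 (n : nat) (f : nat -> R) : R :=
  match n with O => 1 | S m => prod1 m f * f (S m) end.

Fixpoint nsum1 (n : nat) (t : nat -> nat) : nat :=
  match n with O => O | S m => (nsum1 m t + t (S m))%nat end.

(* Main.v *)
Require Import Defs.
From Stdlib Require Import Reals Lra Lia.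
Open Scope R_scope.

Lemma Rpower_pos x y : 0 < Rpower x y.
Proof. unfold Rpower; apply exp_pos. Qed.

Lemma key x b c : 0 < x -> 1 < b -> 1 < c -> Rpower x c + b <= Rpower (x+b) c.
Proof.
  intros Hx Hb Hc.
  assert (E : forall y, 0 < y -> Rpower y c = Rpower y (c-1) * y).
  { intros y Hy. replace c with ((c-1)+1) at 1 by ring.
    rewrite Rpower_plus, Rpower_1; auto. }
  rewrite (E x Hx), (E (x+b)) by lra.
  assert (H1 : Rpower x (c-1) <= Rpower (x+b) (c-1)) by (apply Rle_Rpower_l; lra).
  assert (H2 : Rpower b (c-1) <= Rpower (x+b) (c-1)) by (apply Rle_Rpower_l; lra).
  assert (H3 : 1 <= Rpower b (c-1)).
  { rewrite <- (Rpower_O b) at 1 by lra. apply Rle_Rpower; lra. }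
  rewrite Rmult_plus_distr_l.
  apply Rplus_le_compat; nra.
Qed.

Lemma sum1_shift m f : sum1 (S m) f = sum_f_R0 (fun i => f (S i)) m.
Proof.
  induction m.
  - simpl. ring.
  - change (sum1 (S (S m)) f) with (sum1 (S m) f + f (S (S m))).
    rewrite IHm. reflexivity.
Qed.

Definition F (b c : R) (T : nat) :=
  sum1 T (fun p => Binomial.C (T - 1) (p - 1) * b ^ (T - p)
      * Rpower (c * INR T) (c * INR p)).

Lemma F_eq b c m : 1 < c ->
  F b c (S m) = Rpower (c * INR (S m)) c * (Rpower (c * INR (S m)) c + b) ^ m.
Proof.
  intros Hc. unfold F. rewrite sum1_shift.
  set (a := Rpower (c * INR (S m)) c).
  assert (Hpos : 0 < c * INR (S m)).
  { apply Rmult_lt_0_compat; [lra|]. apply lt_0_INR; lia. }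
  rewrite binomial, scal_sum. apply sum_eq. intros i Hi.
  replace (S m - 1)%nat with m by lia.
  replace (S i - 1)%nat with i by lia.
  replace (S m - S i)%nat with (m - i)%nat by lia.
  replace (c * INR (S i)) with (c * INR (S i)) by ring.
  rewrite <- Rpower_mult with (x := c * INR (S m)) (y := c) (z := INR (S i)) by lra.
  fold a. rewrite Rpower_pow by (unfold a; apply Rpower_pos).
  simpl pow. ring.
Qed.

Lemma F_bound b c T : (1 <= T)%nat -> 1 < b -> 1 < c ->
  0 <= F b c T /\ F b c T <= Rpower (c * INR T + b) (c * INR T).
Proof.
  intros HT Hb Hc. destruct T as [|m]; [lia|].
  rewrite F_eq by lra.
  assert (Hpos : 0 < c * INR (S m)).
  { apply Rmult_lt_0_compat; [lra|]. apply lt_0_INR; lia. }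
  set (a := Rpower (c * INR (S m)) c).
  set (B := Rpower (c * INR (S m) + b) c).
  assert (Ha : 0 < a) by apply Rpower_pos.
  assert (HaB : a <= B) by (apply Rle_Rpower_l; lra).
  assert (HabB : a + b <= B) by (apply key; lra).
  split.
  - apply Rmult_le_pos; [lra|]. apply pow_le; lra.
  - assert (EE : Rpower (c * INR (S m) + b) (c * INR (S m)) =
       Rpower (c * INR (S m) + b) (c + c * INR m)) by (f_equal; rewrite S_INR; ring).
    rewrite EE, Rpower_plus. fold B.
    rewrite <- Rpower_mult, Rpower_pow by apply Rpower_pos.
    fold B. apply Rmult_le_compat; try lra.
    + apply pow_le; lra.
    + apply pow_incr; lra.
Qed.

Lemma main k t b c :
  (forall j, (1 <= j <= k)%nat -> (1 <= t j)%nat) ->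
  1 < b -> 1 < c ->
  0 <= prod1 k (fun j => F b c (t j)) /\
  prod1 k (fun j => F b c (t j))
  <= Rpower (c * INR (nsum1 k t) + b) (c * INR (nsum1 k t)).
Proof.
  intros Ht Hb Hc. induction k.
  - simpl. rewrite Rmult_0_r, Rpower_O by lra. lra.
  - destruct IHk as [IH0 IH1]. { intros j Hj; apply Ht; lia. }
    destruct (F_bound b c (t (S k))) as [F0 F1]; auto. { apply Ht; lia. }
    simpl. split; [nra|].
    set (S0 := nsum1 k t). fold S0 in IH1.
    set (T := t (S k)). fold T in F0, F1.
    rewrite plus_INR, Rmult_plus_distr_l, Rpower_plus.
    assert (0 <= INR S0) by apply pos_INR.
    assert (0 <= INR T) by apply pos_INR.
    apply Rmult_le_compat; auto.
    + eapply Rle_trans; [apply IH1|]. apply Rle_Rpower_l; nra.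
    + eapply Rle_trans; [apply F1|]. apply Rle_Rpower_l; nra.
Qed.

Theorem lemma4p8 (k : nat) (t : nat -> nat) (b c : R) :
  (1 <= k)%nat ->
  (forall j, (1 <= j <= k)%nat -> (1 <= t j)%nat) ->
  1 < b -> 1 < c ->
  prod1 k (fun j =>
    sum1 (t j) (fun p =>
      Binomial.C (t j - 1) (p - 1) * b ^ (t j - p)
      * Rpower (c * INR (t j)) (c * INR p)))
  <= Rpower (c * INR (nsum1 k t) + b) (c * INR (nsum1 k t)).
Proof.
  intros _ Ht Hb Hc. exact (proj2 (main k t b c Ht Hb Hc)).
Qed.
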